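(* Let $r>0$, $\zeta_k>0$, $H>0$, $P_{\text{peak}}>0$, $\gamma_0>0$, $\theta_k\in\mathbb{R}$ and $\theta_l\in\mathbb{R}$ be fixed. For $\theta\in\mathbb{R}$ let $$S_{k,\max}(\theta)=\frac{P_{\text{peak}}\gamma_0}{r^2+\zeta_k^2+H^2-2r\zeta_k\cos(\theta-\theta_k)}.$$ Define $\hat b_k=\theta_l-\sin(\theta_l-\theta_k)$, $\hat A_k=r^2+\zeta_k^2+H^2-r\zeta_k\big(2\cos(\theta_l-\theta_k)+\sin^2(\theta_l-\theta_k)\big)$, $$\hat B_k=2r\zeta_k\left(\frac{1}{\hat A_k^2}-\frac{1}{(r\zeta_k\sin^2(\theta_l-\theta_k)+\hat A_k)^2}\right),$$ $$\hat C_k=\frac{1}{r\zeta_k\sin^2(\theta_l-\theta_k)+\hat A_k}+\frac{2r\zeta_k\sin^2(\theta_l-\theta_k)}{(r\zeta_k\sin^2(\theta_l-\theta_k)+\hat A_k)^2}-\frac{r\zeta_k\sin^2(\theta_l-\theta_k)}{\hat A_k^2},$$ and $$S^{\text{lb2}}_{k,\max}(\theta)=P_{\text{peak}}\gamma_0\left(-\frac{r\zeta_k(\theta-\hat b_k)^2}{\hat A_k^2}+\hat B_k\sin(\theta_l-\theta_k)(\theta-\hat b_k)+\hat C_k\right).$$ Then $\hat A_k>0$ and for all $\theta\in\mathbb{R}$, $$S^{\text{lb2}}_{k,\max}(\theta)\le\frac{P_{\text{peak}}\gamma_0}{r\zeta_k(\theta-\hat b_k)^2+\hat A_k}\le S_{k,\max}(\theta),$$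 with equality throughout at $\theta=\theta_l$; moreover $S^{\text{lb2}}_{k,\max}$ is concave in $\theta$. *)

(* Defs.v *)
From Stdlib Require Import Reals Lra.
Open Scope R_scope.

Definition S_max (r zeta H P g0 thk th : R) : R :=
  P * g0 / (r ^ 2 + zeta ^ 2 + H ^ 2 - 2 * r * zeta * cos (th - thk)).

Definition b_hat (thk thl : R) : R := thl - sin (thl - thk).

Definition A_hat (r zeta H thk thl : R) : R :=
  r ^ 2 + zeta ^ 2 + H ^ 2
  - r * zeta * (2 * cos (thl - thk) + (sin (thl - thk)) ^ 2).

Definition B_hat (r zeta H thk thl : R) : R :=
  let A := A_hat r zeta H thk thl in
  let s2 := (sin (thl - thk)) ^ 2 in
  2 * r * zeta * (1 / A ^ 2 - 1 / (r * zeta * s2 + A) ^ 2).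

Definition C_hat (r zeta H thk thl : R) : R :=
  let A := A_hat r zeta H thk thl in
  let s2 := (sin (thl - thk)) ^ 2 in
  1 / (r * zeta * s2 + A)
  + 2 * r * zeta * s2 / (r * zeta * s2 + A) ^ 2
  - r * zeta * s2 / A ^ 2.

Definition S_lb2 (r zeta H P g0 thk thl th : R) : R :=
  let A := A_hat r zeta H thk thl in
  let b := b_hat thk thl in
  P * g0 * (- (r * zeta * (th - b) ^ 2) / A ^ 2
            + B_hat r zeta H thk thl * sin (thl - thk) * (th - b)
            + C_hat r zeta H thk thl).

Definition S_mid (r zeta H P g0 thk thl th : R) : R :=
  P * g0 / (r * zeta * (th - b_hat thk thl) ^ 2 + A_hat r zeta H thk thl).

Definition concave (f : R -> R) : Prop :=
  forall x y t : R, 0 <= t <= 1 ->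
    t * f x + (1 - t) * f y <= f (t * x + (1 - t) * y).

(* Main.v *)
Require Import Defs.
From Stdlib Require Import Reals.
From Stdlib Require Import Reals Lra Psatz.
From Coquelicot Require Import Coquelicot.

Lemma key_ineq (c s h : R) (hcs : c^2 + s^2 = 1) :
  2*c*(1 - cos h) + 2*s*(sin h - h) <= h^2.
Proof.
  pose (dphi := fun x => 2*x - 2*c*sin x - 2*s*(cos x - 1)).
  pose (phi := fun x => x^2 - 2*c*(1 - cos x) - 2*s*(sin x - x)).
  assert (H2 : forall x, 0 <= 2 - 2*c*cos x + 2*s*sin x).
  { intro x. pose proof (sin2_cos2 x). unfold Rsqr in *.
    assert (E : (c*cos x - s*sin x)^2 + (c*sin x + s*cos x)^2 = (c^2+s^2)*(sin x * sin x + cos x * cos x)) by ring.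
    rewrite hcs, H, Rmult_1_l in E.
    assert ((c*cos x - s*sin x)^2 <= 1) by (pose proof (pow2_ge_0 (c*sin x + s*cos x)); lra).
    nra. }
  assert (H1 : forall x, 0 <= dphi x * x).
  { intro x.
    destruct (MVT_gen dphi 0 x (fun y => 2 - 2*c*cos y + 2*s*sin y)) as [y [_ Hy]].
    - intros y _. unfold dphi. auto_derive; auto. ring.
    - intros y _. apply continuity_pt_filterlim. apply (@ex_derive_continuous R_AbsRing R_NormedModule).
      unfold dphi. auto_derive; auto.
    - assert (dphi 0 = 0) by (unfold dphi; rewrite sin_0, cos_0; ring).
      rewrite H, !Rminus_0_r in Hy. rewrite Hy.
      specialize (H2 y). nra. }
  destruct (MVT_gen phi 0 h dphi) as [y [Hyr Hy]].
  - intros y _. unfold phi, dphi. auto_derive; auto. ring.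
  - intros y _. apply continuity_pt_filterlim. apply (@ex_derive_continuous R_AbsRing R_NormedModule).
    unfold phi. auto_derive; auto.
  - assert (phi 0 = 0) by (unfold phi; rewrite sin_0, cos_0; ring).
    rewrite H, !Rminus_0_r in Hy.
    assert (0 <= phi h).
    { rewrite Hy. specialize (H1 y).
      assert (0 <= y * h).
      { destruct Hyr as [Ha Hb]. unfold Rmin, Rmax in *.
        destruct (Rle_dec 0 h); nra. }
      destruct (Req_dec y 0) as [->|Hy0].
      - assert (dphi 0 = 0) by (unfold dphi; rewrite sin_0, cos_0; ring). rewrite H3. lra.
      - assert (0 < y*y) by nra.
        assert (0 <= (dphi y * y) * (y * h)) by nra.
        nra. }
    unfold phi in H0. lra.
Qed.
Open Scope R_scope.

Theorem mainTheorem5 (r zeta H P g0 thk thl : R)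
  (hr : 0 < r) (hz : 0 < zeta) (hH : 0 < H) (hP : 0 < P) (hg : 0 < g0) :
  0 < A_hat r zeta H thk thl /\
  (forall th : R,
     S_lb2 r zeta H P g0 thk thl th <= S_mid r zeta H P g0 thk thl th /\
     S_mid r zeta H P g0 thk thl th <= S_max r zeta H P g0 thk th) /\
  (S_lb2 r zeta H P g0 thk thl thl = S_mid r zeta H P g0 thk thl thl /\
   S_mid r zeta H P g0 thk thl thl = S_max r zeta H P g0 thk thl) /\
  concave (S_lb2 r zeta H P g0 thk thl).
Proof.
  pose (d := thl - thk).
  pose (c := cos d). pose (s := sin d).
  pose (a := r * zeta).
  assert (hcs : c^2 + s^2 = 1) by (pose proof (sin2_cos2 d); unfold Rsqr in *; unfold c, s; lra).
  assert (ha : 0 < a) by (unfold a; nra).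
  assert (hc1 : c <= 1) by (unfold c; apply COS_bound).
  assert (HA : A_hat r zeta H thk thl = r^2 + zeta^2 + H^2 - a*(2*c + s^2)) by reflexivity.
  assert (Apos : 0 < A_hat r zeta H thk thl).
  { rewrite HA.
    assert (r^2 + zeta^2 + H^2 - a*(2*c+s^2) = (r-zeta)^2 + H^2 + a*(1-c)^2) by (replace (s^2) with (1 - c^2) by lra; unfold a; ring).
    rewrite H0. pose proof (pow2_ge_0 (r-zeta)). pose proof (pow2_ge_0 (1-c)).
    assert (0 < H^2) by nra. nra. }
  set (A := A_hat r zeta H thk thl) in *.
  set (E := a * s^2 + A).
  assert (hs2 : 0 <= s^2) by apply pow2_ge_0.
  assert (EA : A <= E) by (unfold E; nra).
  assert (Epos : 0 < E) by lra.
  assert (hb : b_hat thk thl = thl - s) by reflexivity.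
  assert (hB : B_hat r zeta H thk thl = 2 * a * (1/A^2 - 1/E^2)) by (unfold B_hat; cbv zeta; fold A; unfold E, a, s, d; ring).
  assert (hC : C_hat r zeta H thk thl = 1/E + 2*a*s^2/E^2 - a*s^2/A^2) by (unfold C_hat; cbv zeta; fold A; unfold E, a, s, d; rewrite <- Rmult_assoc; reflexivity).
  assert (Hlb : forall th, S_lb2 r zeta H P g0 thk thl th =
     P * g0 * (- (a * (th - (thl - s))^2)/A^2 + 2*a*(1/A^2 - 1/E^2) * s * (th - (thl - s))
        + (1/E + 2*a*s^2/E^2 - a*s^2/A^2))).
  { intro th. unfold S_lb2. rewrite hb, hB, hC. reflexivity. }
  assert (Hmid : forall th, S_mid r zeta H P g0 thk thl th = P * g0 / (a * (th - (thl - s))^2 + A)).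
  { intro th. unfold S_mid. rewrite hb. reflexivity. }
  assert (Dpos : forall th, 0 < r ^ 2 + zeta ^ 2 + H ^ 2 - 2 * r * zeta * cos (th - thk)).
  { intro th. pose proof (COS_bound (th - thk)) as [_ Hc].
    assert (0 < H^2) by nra. pose proof (pow2_ge_0 (r-zeta)).
    assert (a * cos (th - thk) <= a * 1) by (apply Rmult_le_compat_l; lra).
    unfold a in *. replace ((r-zeta)^2) with (r^2+zeta^2-2*r*zeta) in * by ring. lra. }
  assert (Pg : 0 < P * g0) by nra.
  split; [exact Apos|]. split; [|split; [split|]].
  - intro th. rewrite Hlb, Hmid. set (y := th - (thl - s)).
    assert (Fpos : 0 < a*y^2 + A) by (pose proof (pow2_ge_0 y); nra).
    split.
    + apply Rmult_le_compat_l; [lra|].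
      assert (Id : 1/(a*y^2+A) - (- (a * y^2)/A^2 + 2*a*(1/A^2 - 1/E^2) * s * y
        + (1/E + 2*a*s^2/E^2 - a*s^2/A^2)) =
        a^2*(y^2-s^2)^2/(E^2*(a*y^2+A)) + a*(1/A^2-1/E^2)*(y-s)^2).
      { unfold E in *. field. split; lra. }
      assert (0 <= a^2*(y^2-s^2)^2/(E^2*(a*y^2+A))).
      { apply Rle_mult_inv_pos. pose proof (pow2_ge_0 (y^2-s^2)). pose proof (pow2_ge_0 a). nra.
        apply Rmult_lt_0_compat; [apply pow_lt|]; lra. }
      assert (0 <= 1/A^2-1/E^2).
      { assert (/E^2 <= /A^2). apply Rinv_le_contravar. nra. nra. unfold Rdiv. lra. }
      assert (0 <= a*(1/A^2-1/E^2)*(y-s)^2).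
      { pose proof (pow2_ge_0 (y-s)). apply Rmult_le_pos; [|lra]. nra. }
      unfold Rdiv at 1 in Id. rewrite Rmult_1_l in Id. unfold Rdiv at 1. lra.
    + unfold S_max. unfold Rdiv. apply Rmult_le_compat_l; [lra|].
      apply Rinv_le_contravar; [apply Dpos|].
      pose proof (key_ineq c s (th - thl) hcs) as K.
      assert (cos (th - thk) = c * cos (th - thl) - s * sin (th - thl)).
      { replace (th - thk) with (d + (th - thl)) by (unfold d; ring). rewrite cos_plus. reflexivity. }
      rewrite H0. unfold y. rewrite HA. unfold a in *. nra.
  - rewrite Hlb, Hmid. replace (thl - (thl - s)) with s by ring. fold E.
    apply Rmult_eq_compat_l. field. split; lra.
  - rewrite Hmid. unfold S_max. replace (thl - (thl - s)) with s by ring.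
    f_equal. rewrite HA. fold d. fold c. unfold a. ring.
  - intros x z t Ht. rewrite !Hlb.
    set (K := 2 * a * (1 / A ^ 2 - 1 / E ^ 2) * s).
    set (C0 := 1 / E + 2 * a * s ^ 2 / E ^ 2 - a * s ^ 2 / A ^ 2).
    assert (Ai : 0 <= a / A^2) by (apply Rle_mult_inv_pos; nra).
    assert (Id : P * g0 * (- (a * (t * x + (1 - t) * z - (thl - s)) ^ 2) / A ^ 2 + K * (t * x + (1 - t) * z - (thl - s)) + C0)
      - (t * (P * g0 * (- (a * (x - (thl - s)) ^ 2) / A ^ 2 + K * (x - (thl - s)) + C0)) +
         (1 - t) * (P * g0 * (- (a * (z - (thl - s)) ^ 2) / A ^ 2 + K * (z - (thl - s)) + C0)))
      = P * g0 * (a / A^2) * (t * (1-t)) * (x - z)^2).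
    { field. lra. }
    assert (0 <= P * g0 * (a / A^2) * (t * (1-t)) * (x - z)^2).
    { apply Rmult_le_pos; [|apply pow2_ge_0]. apply Rmult_le_pos; [|nra].
      apply Rmult_le_pos; lra. }
    lra.
Qed.
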